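(* Let $k\ge2$, $C>0$, $\lambda_1,\dots,\lambda_k\in(0,1)$ with $\sum_i\lambda_i=1$, and let $V_1,\dots,V_k$ be measurable functions on $\mathbb{R}^n$ with $e^{-V_i}$ integrable, satisfying $$\sum_{i=1}^k\lambda_iV_i(x_i)\ge C\sum_{1\le i<j\le k}\lambda_i\lambda_j\langle x_i,x_j\rangle\quad\text{for all }x_1,\dots,x_k\in\mathbb{R}^n .$$ Let $(\lambda_1U_1,\dots,\lambda_kU_k)$ be a solution to the dual multimarginal problem with marginals $\mu_i=\frac{e^{-V_i}dx_i}{\int e^{-V_i}dx_i}$ and cost $c(x_1,\dots,x_k)=C\sum_{1\le i<j\le k}\lambda_i\lambda_j\langle x_i,x_j\rangle$. Then $$\prod_{i=1}^k\Bigl(\int e^{-V_i}dx_i\Bigr)^{\lambda_i}\le\prod_{i=1}^k\Bigl(\int e^{-U_i}dx_i\Bigr)^{\lambda_i}.$$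
   Context: The multimarginal Kantorovich maximization problem with marginals $\mu_1,\dots,\mu_k$ and cost $c$ is to maximize $\int c\,dP$ over probability measures $P$ on $(\mathbb{R}^n)^k$ with marginals $\mu_1,\dots,\mu_k$. Its dual problem is to minimize $\sum_{i=1}^k\int w_i\,d\mu_i$ over tuples $(w_1,\dots,w_k)$ of functions with $\sum_{i=1}^kw_i(x_i)\ge c(x_1,\dots,x_k)$ for all $x_1,\dots,x_k$; a solution is a minimizing tuple (at which equality $\sum_iw_i(x_i)=c(x_1,\dots,x_k)$ holds almost everywhere with respect to an optimal plan $P$). *)

(* Defs.v *)
From HB Require Import structures.
From mathcomp Require Import all_boot all_order all_algebra.
From mathcomp Require Import all_classical all_reals all_analysis.
Set Implicit Arguments. Unset Strict Implicit. Unset Printing Implicit Defensive.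
Import Order.TTheory GRing.Theory Num.Theory.
Local Open Scope classical_set_scope.
Local Open Scope ring_scope.

(* R^n is modelled by n.-tuple R, with its product (Borel) sigma-algebra. *)
Notation Rn R n := (n.-tuple (measurableTypeR R)).

Definition dotp (R : realType) (n : nat) (x y : Rn R n) : R :=
  \sum_(l < n) tnth x l * tnth y l.

(* Lebesgue measure on R^n: the measure on the Borel sets of R^n giving to
   every closed box prod_l [a_l, b_l] (a_l <= b_l) its volume
   prod_l (b_l - a_l).  Such a measure exists and is unique. *)
Definition is_lebesgue_Rn (R : realType) (n : nat)
    (mu : {measure set (Rn R n) -> \bar R}) : Prop :=
  forall a b : 'I_n -> R, (forall l, a l <= b l) ->
    mu [set x | forall l, a l <= tnth x l <= b l] =
    (\prod_(l < n) (b l - a l))%:E.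

Definition Zc (R : realType) (n : nat) (mu : {measure set (Rn R n) -> \bar R})
    (V : Rn R n -> R) : \bar R :=
  (\int[mu]_x (expR (- V x))%:E)%E.

Definition dens_integrable (R : realType) (n : nat)
    (mu : {measure set (Rn R n) -> \bar R}) (V : Rn R n -> R) (f : Rn R n -> R) : Prop :=
  measurable_fun setT f /\
  mu.-integrable setT (fun x => (f x * expR (- V x) / fine (Zc mu V))%:E).

Definition dens_int (R : realType) (n : nat)
    (mu : {measure set (Rn R n) -> \bar R}) (V : Rn R n -> R) (f : Rn R n -> R) : \bar R :=
  (\int[mu]_x (f x * expR (- V x) / fine (Zc mu V))%:E)%E.

Definition dual_admissible (R : realType) (n k : nat)
    (mu : {measure set (Rn R n) -> \bar R}) (V : 'I_k -> Rn R n -> R)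
    (c : ('I_k -> Rn R n) -> R) (w : 'I_k -> Rn R n -> R) : Prop :=
  (forall i, dens_integrable mu (V i) (w i)) /\
  (forall x : 'I_k -> Rn R n, c x <= \sum_(i < k) w i (x i)).

Definition dual_value (R : realType) (n k : nat)
    (mu : {measure set (Rn R n) -> \bar R}) (V : 'I_k -> Rn R n -> R)
    (w : 'I_k -> Rn R n -> R) : \bar R :=
  (\sum_(i < k) dens_int mu (V i) (w i))%E.

Definition dual_solution (R : realType) (n k : nat)
    (mu : {measure set (Rn R n) -> \bar R}) (V : 'I_k -> Rn R n -> R)
    (c : ('I_k -> Rn R n) -> R) (w : 'I_k -> Rn R n -> R) : Prop :=
  dual_admissible mu V c w /\
  (forall w', dual_admissible mu V c w' ->
     (dual_value mu V w <= dual_value mu V w')%E).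

(* Main.v *)
Require Import Defs.
From HB Require Import structures.
From mathcomp Require Import all_boot all_order all_algebra.
From mathcomp Require Import all_classical all_reals all_analysis.
From mathcomp Require Import measurable_realfun ring lra.
Set Implicit Arguments. Unset Strict Implicit. Unset Printing Implicit Defensive.
Import Order.TTheory GRing.Theory Num.Theory.
Local Open Scope classical_set_scope.
Local Open Scope ring_scope.
Section Key.
Context d (T : measurableType d) (R : realType) (mu : {measure set T -> \bar R}).

Lemma intD (f g : T -> R) : mu.-integrable setT (EFin \o f) ->
  mu.-integrable setT (EFin \o g) -> mu.-integrable setT (fun x => (f x + g x)%:E).
Proof. move=> hf hg; exact: (eq_integrable measurableT _ _ _ (integrableD measurableT hf hg)). Qed.

Lemma intB (f g : T -> R) : mu.-integrable setT (EFin \o f) ->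
  mu.-integrable setT (EFin \o g) -> mu.-integrable setT (fun x => (f x - g x)%:E).
Proof. move=> hf hg; exact: (eq_integrable measurableT _ _ _ (integrableB measurableT hf hg)). Qed.

Lemma intZ (c : R) (f : T -> R) : mu.-integrable setT (EFin \o f) ->
  mu.-integrable setT (fun x => (c * f x)%:E).
Proof. move=> hf; exact: (eq_integrable measurableT _ _ _ (integrableZl measurableT c hf)). Qed.

Lemma intZr (c : R) (f : T -> R) : mu.-integrable setT (EFin \o f) ->
  mu.-integrable setT (fun x => (f x * c)%:E).
Proof. move=> hf; have := intZ c hf; apply: eq_integrable => // x _; by rewrite mulrC. Qed.

End Key.
Section Key2.
Context d (T : measurableType d) (R : realType) (mu : {measure set T -> \bar R}).

Lemma mexpN (V : T -> R) : measurable_fun setT V ->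
  measurable_fun setT (fun x => expR (- V x)).
Proof.
move=> mV; apply: measurableT_comp; first exact: measurable_realfun.measurable_expR.
by apply: measurableT_comp => //; exact: oppr_measurable.
Qed.

Lemma key (V U : T -> R) (m : R) :
  measurable_fun setT V -> measurable_fun setT U ->
  mu.-integrable setT (fun x => (expR (- V x))%:E) ->
  0 < fine (\int[mu]_x (expR (- V x))%:E)%E ->
  (\int[mu]_x (expR (- U x))%:E < +oo)%E ->
  mu.-integrable setT (fun x => (U x * expR (- V x) / fine (\int[mu]_x (expR (- V x))%:E)%E)%:E) ->
  (forall x, m <= V x) ->
  mu.-integrable setT (fun x => (V x * expR (- V x) / fine (\int[mu]_x (expR (- V x))%:E)%E)%:E) /\
  ln (fine (\int[mu]_x (expR (- V x))%:E)%E)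
   + Rintegral mu setT (fun x => V x * expR (- V x) / fine (\int[mu]_x (expR (- V x))%:E)%E)
   - Rintegral mu setT (fun x => U x * expR (- V x) / fine (\int[mu]_x (expR (- V x))%:E)%E)
   <= ln (fine (\int[mu]_x (expR (- U x))%:E)%E)
  /\ 0 < fine (\int[mu]_x (expR (- U x))%:E)%E.
Proof.
move=> mV mU iV Zpos ZUfin iUp lb.
set Z := fine (\int[mu]_x (expR (- V x))%:E)%E.
set ZU := fine (\int[mu]_x (expR (- U x))%:E)%E.
have Z0 : Z != 0 by rewrite gt_eqF.
have iU : mu.-integrable setT (fun x => (expR (- U x))%:E).
  apply/integrableP; split; first exact/measurable_EFinP/mexpN.
  rewrite (eq_integral (fun x => (expR (- U x))%:E)) //.
  by move=> x _; rewrite /= ger0_norm ?expR_ge0.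
have ip : mu.-integrable setT (fun x => (expR (- V x) / Z)%:E).
  exact: (intZr (Z^-1) (f := fun x => expR (- V x)) iV).
have ieU : mu.-integrable setT (fun x => (expR (- U x) / Z)%:E).
  exact: (intZr (Z^-1) (f := fun x => expR (- U x)) iU).
have ip1 : Rintegral mu setT (fun x => expR (- V x) / Z) = 1.
  rewrite (RintegralZr (f := fun x => expR (- V x))) //.
  by change (Z * Z^-1 = 1); rewrite mulfV.
have pt : forall a x, Z * expR a * ((1 - a) * (expR (- V x) / Z)
      + V x * expR (- V x) / Z - U x * expR (- V x) / Z) <= expR (- U x).
  move=> a x.
  have -> : Z * expR a * ((1 - a) * (expR (- V x) / Z)
      + V x * expR (- V x) / Z - U x * expR (- V x) / Z)
      = expR a * expR (- V x) * (1 + (V x - U x - a)) by field.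
  have -> : expR (- U x) = expR a * expR (- V x) * expR (V x - U x - a).
    by rewrite -!expRD; congr expR; ring.
  by rewrite ler_pM2l ?mulr_gt0 ?expR_gt0 //; exact: expR_ge1Dx.
have iVp : mu.-integrable setT (fun x => (V x * expR (- V x) / Z)%:E).
  apply: (le_integrable measurableT
    (g := fun x => (expR (- U x) / Z + `|U x * expR (- V x) / Z|
                    + `|m| * (expR (- V x) / Z))%:E)).
  - apply/measurable_EFinP; apply: measurable_funM; last exact: measurable_cst.
    by apply: measurable_funM => //; exact: mexpN.
  - move=> x _; rewrite /= lee_fin.
    have := pt 0 x; rewrite expR0 mulr1 subr0 mul1r.
    have hq : 0 < expR (- V x) / Z by rewrite divr_gt0 ?expR_gt0.
    have h1 : m * (expR (- V x) / Z) <= V x * expR (- V x) / Z.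
      by rewrite -mulrA ler_wpM2r // ltW.
    have h2 : - `|m| * (expR (- V x) / Z) <= m * (expR (- V x) / Z).
      apply: ler_wpM2r; first exact: ltW. have := ler_norm (- m); rewrite normrN; lra.
    have h3 : U x * expR (- V x) / Z <= `|U x * expR (- V x) / Z| by exact: ler_norm.
    have h4 : 0 <= `|U x * expR (- V x) / Z| by [].
    have h5 : 0 <= expR (- U x) / Z by rewrite divr_ge0 ?expR_ge0 ?ltW.
    have h6 : 0 <= `|m| * (expR (- V x) / Z) by rewrite mulr_ge0 // ltW.
    move=> hpt.
    have h7 : expR (- V x) / Z + V x * expR (- V x) / Z - U x * expR (- V x) / Z
              <= expR (- U x) / Z.
      by rewrite ler_pdivlMr // mulrC.
    apply: (le_trans _ (ler_norm _)); rewrite ler_norml; apply/andP; split.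
    + move: hq h1 h2 h3 h4 h5 h6 h7; set q := expR (- V x) / Z;
      set vq := V x * expR (- V x) / Z; set uq := U x * expR (- V x) / Z;
      set aq := `|uq|; set mq := `|m| * q; set eu := expR (- U x) / Z.
      rewrite mulNr -/mq; lra.
    + move: hq h1 h2 h3 h4 h5 h6 h7; set q := expR (- V x) / Z;
      set vq := V x * expR (- V x) / Z; set uq := U x * expR (- V x) / Z;
      set aq := `|uq|; set mq := `|m| * q; set eu := expR (- U x) / Z.
      lra.
  - apply: intD; last exact: (intZ `|m| (f := fun x => expR (- V x) / Z) ip).
    apply: intD; first exact: ieU.
    have := integrable_abse iUp.
    by apply: eq_integrable => // x _.
split => //.
set A := Rintegral mu setT (fun x => V x * expR (- V x) / Z).
set B := Rintegral mu setT (fun x => U x * expR (- V x) / Z).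
set a := A - B.
have i1 := intZ (1 - a) (f := fun x => expR (- V x) / Z) ip.
have i2 := intD (f := fun x => (1 - a) * (expR (- V x) / Z))
   (g := fun x => V x * expR (- V x) / Z) i1 iVp.
have i3 := intB (f := fun x => (1 - a) * (expR (- V x) / Z) + V x * expR (- V x) / Z)
   (g := fun x => U x * expR (- V x) / Z) i2 iUp.
have i4 := intZ (Z * expR a) i3.
have := le_Rintegral measurableT i4 iU (fun x _ => pt a x).
rewrite (RintegralZl _ measurableT i3) (RintegralB measurableT i2 iUp).
rewrite (RintegralD measurableT i1 iVp) (RintegralZl _ measurableT ip) ip1.
rewrite -/A -/B -/ZU.
have -> : (1 - a) * 1 + A - B = 1 by rewrite /a; ring.
rewrite mulr1 => hZU.
have ZUpos : 0 < ZU by apply: lt_le_trans hZU; rewrite mulr_gt0 ?expR_gt0.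
split => //.
rewrite -ler_ln ?posrE ?mulr_gt0 ?expR_gt0 // in hZU.
rewrite lnM ?posrE ?expR_gt0 // expRK in hZU.
by rewrite -addrA.
Qed.

End Key2.
Section Key3.
Context d (T : measurableType d) (R : realType) (mu : {measure set T -> \bar R}).

Lemma intlam (c : R) (g h : T -> R) (z : R) :
  mu.-integrable setT (fun x => (g x * h x / z)%:E) ->
  (\int[mu]_x (c * g x * h x / z)%:E)%E = (c * Rintegral mu setT (fun x => g x * h x / z))%:E.
Proof.
move=> hi.
rewrite (eq_integral (fun x => (c * (g x * h x / z))%:E)); last first.
  by move=> x _; rewrite !mulrA.
rewrite -(RintegralZl c measurableT hi) /Rintegral fineK //.
exact: (integrable_fin_num measurableT (intZ c (f := fun x => g x * h x / z) hi)).
Qed.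

End Key3.

Lemma prod_poweR_gt0 (R : realType) (k : nat) (P : pred 'I_k) (F : 'I_k -> \bar R) (r : 'I_k -> R) :
  (forall i, (0 < F i)%E) -> (0 < \prod_(i < k | P i) poweR (F i) (r i))%E.
Proof.
move=> h; apply: (big_ind (fun x => 0 < x)%E) => //.
- by move=> x y; exact: mule_gt0.
- by move=> i _; exact: poweR_gt0.
Qed.

Lemma poweR_fine (R : realType) (x : \bar R) (r : R) :
  x \is a fin_num -> poweR x r = ((fine x) `^ r)%:E.
Proof. by case: x. Qed.

Lemma prod_le (R : realType) (k : nat) (F G : 'I_k -> R) :
  \prod_(i < k) F i <= \prod_(i < k) G i ->
  (\prod_(i < k) (F i)%:E <= \prod_(i < k) (G i)%:E)%E.
Proof. by rewrite !prodEFin lee_fin. Qed.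

Lemma prod_powR_le (R : realType) (k : nat) (lam a b : 'I_k -> R) :
  (forall i, 0 < a i) -> (forall i, 0 < b i) ->
  \sum_(i < k) lam i * ln (a i) <= \sum_(i < k) lam i * ln (b i) ->
  \prod_(i < k) a i `^ lam i <= \prod_(i < k) b i `^ lam i.
Proof.
move=> ha hb h.
rewrite (eq_bigr (fun i => expR (lam i * ln (a i)))); last first.
  by move=> i _; rewrite /powR gt_eqF.
rewrite [X in _ <= X](eq_bigr (fun i => expR (lam i * ln (b i)))); last first.
  by move=> i _; rewrite /powR gt_eqF.
by rewrite -!expR_sum ler_expR.
Qed.

Lemma final_ineq (R : realType) (k : nat) (lam la lb A B : 'I_k -> R) :
  (forall i, 0 <= lam i) -> (forall i, la i + A i - B i <= lb i) ->
  \sum_(i < k) lam i * B i <= \sum_(i < k) lam i * A i ->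
  \sum_(i < k) lam i * la i <= \sum_(i < k) lam i * lb i.
Proof.
move=> hl hi hopt.
apply: (le_trans _ (ler_sum _ (fun i _ => ler_wpM2l (hl i) (hi i)))).
have -> : \sum_(i < k) lam i * (la i + A i - B i) =
   \sum_(i < k) lam i * la i + (\sum_(i < k) lam i * A i - \sum_(i < k) lam i * B i).
  by rewrite -sumrB -big_split; apply: eq_bigr => i _ /=; ring.
lra.
Qed.
Theorem mainTheorem15 (R : realType) (n k : nat)
    (mu : {measure set (Rn R n) -> \bar R}) (Hmu : is_lebesgue_Rn mu)
    (C : R) (lam : 'I_k -> R) (V U : 'I_k -> Rn R n -> R) :
  (2 <= k)%N -> 0 < C ->
  (forall i, 0 < lam i < 1) -> \sum_(i < k) lam i = 1 ->
  (forall i, measurable_fun setT (V i)) ->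
  (forall i, mu.-integrable setT (fun x => (expR (- V i x))%:E)) ->
  (forall x : 'I_k -> Rn R n,
     C * \sum_(i < k) \sum_(j < k | (i < j)%N) lam i * lam j * dotp (x i) (x j)
     <= \sum_(i < k) lam i * V i (x i)) ->
  dual_solution mu V
    (fun x => C * \sum_(i < k) \sum_(j < k | (i < j)%N) lam i * lam j * dotp (x i) (x j))
    (fun i x => lam i * U i x) ->
  (\prod_(i < k) poweR (Zc mu (V i)) (lam i)
   <= \prod_(i < k) poweR (Zc mu (U i)) (lam i))%E.
Proof.
move=> k2 C0 hlam hsum mV iV hcost [[admI admC] opt].
have lam0 i : 0 < lam i by case/andP: (hlam i).
have lamne i : lam i != 0 by rewrite gt_eqF.
rewrite /dual_solution /dual_admissible /dens_integrable /dual_value /dens_int /Zc in admI opt *.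
have ZVe i : (\int[mu]_x (expR (- V i x))%:E)%E = (fine (\int[mu]_x (expR (- V i x))%:E)%E)%:E.
  by rewrite fineK // (integrable_fin_num measurableT (iV i)).
have ZVge0 i : 0 <= fine (\int[mu]_x (expR (- V i x))%:E)%E.
  by rewrite fine_ge0 // integral_ge0 // => x _; rewrite lee_fin expR_ge0.
have [[j Zj]|Zpos] := pselect (exists j, fine (\int[mu]_x (expR (- V j x))%:E)%E = 0).
  rewrite (bigD1 j) //= ZVe Zj poweR_EFin powR0 ?lamne // mul0e.
  by apply: prode_ge0 => i _; exact: poweR_ge0.
have {}Zpos i : 0 < fine (\int[mu]_x (expR (- V i x))%:E)%E.
  rewrite lt_neqAle ZVge0 andbT; apply/eqP => h; apply: Zpos; by exists i.
pose z : Rn R n := [tuple (0 : R) | _ < n].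
have dz1 x : dotp x z = 0.
  by rewrite /dotp big1 // => l _; rewrite tnth_mktuple mulr0.
have dz2 x : dotp z x = 0.
  by rewrite /dotp big1 // => l _; rewrite tnth_mktuple mul0r.
have lb i y : - (\sum_(j < k | j != i) lam j * V j z) / lam i <= V i y.
  have := hcost (fun j => if j == i then y else z).
  rewrite big1; last first.
    move=> a _; rewrite big1 // => b hab.
    case: (eqVneq a i) => [ha|ha]; case: (eqVneq b i) => [hb|hb].
    - by move: hab; rewrite ha hb ltnn.
    - by rewrite dz1 mulr0.
    - by rewrite dz2 mulr0.
    - by rewrite dz1 mulr0.
  rewrite mulr0 (bigD1 i) //= eqxx.
  rewrite (eq_bigr (fun j => lam j * V j z)); last by move=> j /negbTE ->.
  move=> h; rewrite ler_pdivrMr //; rewrite mulrC; lra.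
have mU i : measurable_fun setT (U i).
  have := measurable_funM (measurable_cst (lam i)^-1) (admI i).1.
  by apply: eq_measurable_fun => x _ /=; rewrite mulrA mulVf ?mul1r.
have iUp i : mu.-integrable setT (fun x => (U i x * expR (- V i x)
                  / fine (\int[mu]_x (expR (- V i x))%:E)%E)%:E).
  have := intZ (lam i)^-1 (admI i).2.
  by apply: eq_integrable => // x _; rewrite !mulrA mulVf ?mul1r.
have ZUge0 i : (0 <= \int[mu]_x (expR (- U i x))%:E)%E.
  by rewrite integral_ge0 // => x _; rewrite lee_fin expR_ge0.
have ZUpos i : (0 < \int[mu]_x (expR (- U i x))%:E)%E.
  case: (eqVneq (\int[mu]_x (expR (- U i x))%:E)%E +oo%E) => [->|ne]; first exact: lt0y.
  have fin : (\int[mu]_x (expR (- U i x))%:E < +oo)%E by rewrite lt_neqAle ne leey.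
  have [_ [_ p]] := key (mV i) (mU i) (iV i) (Zpos i) fin (iUp i) (lb i).
  by rewrite -(fineK (x := (\int[mu]_x (expR (- U i x))%:E)%E)) ?lte_fin // ge0_fin_numE.
have [[j Uj]|Ufin] := pselect (exists j, (\int[mu]_x (expR (- U j x))%:E)%E = +oo%E).
  rewrite [X in (_ <= X)%E](bigD1 j) //= Uj poweRyr ?lamne // gt0_mulye ?leey //.
  by apply: prod_poweR_gt0.
have {}Ufin i : (\int[mu]_x (expR (- U i x))%:E < +oo)%E.
  rewrite lt_neqAle leey andbT; apply/eqP => h; apply: Ufin; by exists i.
have K i := key (mV i) (mU i) (iV i) (Zpos i) (Ufin i) (iUp i) (lb i).
have ZUe i : (\int[mu]_x (expR (- U i x))%:E)%E = (fine (\int[mu]_x (expR (- U i x))%:E)%E)%:E.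
  by rewrite fineK // ge0_fin_numE.
have := opt (fun i x => lam i * V i x).
have adm : (forall i, measurable_fun setT (fun x => lam i * V i x) /\
     mu.-integrable setT (fun x => (lam i * V i x * expR (- V i x)
                  / fine (\int[mu]_x (expR (- V i x))%:E)%E)%:E)) /\
   (forall x : 'I_k -> Rn R n,
     C * \sum_(i < k) \sum_(j < k | (i < j)%N) lam i * lam j * dotp (x i) (x j)
     <= \sum_(i < k) lam i * V i (x i)).
  split => // i; split.
    exact: measurable_funM (measurable_cst _) (mV i).
  have := intZ (lam i) (K i).1.
  by apply: eq_integrable => // x _; rewrite !mulrA.
move=> /(_ adm).
rewrite (eq_bigr (fun i => (lam i * Rintegral mu setT (fun x => U i x * expR (- V i x)
                  / fine (\int[mu]_x (expR (- V i x))%:E)%E))%:E)); last first.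
  by move=> i _; rewrite intlam.
rewrite [X in (_ <= X)%E -> _](eq_bigr (fun i => (lam i * Rintegral mu setT (fun x => V i x * expR (- V i x)
                  / fine (\int[mu]_x (expR (- V i x))%:E)%E))%:E)); last first.
  by move=> i _; rewrite intlam //; exact: (K i).1.
rewrite !sumEFin lee_fin => hopt.
rewrite (eq_bigr (fun i => (fine (\int[mu]_x (expR (- V i x))%:E)%E `^ lam i)%:E)); last first.
  by move=> i _; rewrite poweR_fine // (integrable_fin_num measurableT (iV i)).
rewrite [X in (_ <= X)%E](eq_bigr (fun i => (fine (\int[mu]_x (expR (- U i x))%:E)%E `^ lam i)%:E)); last first.
  by move=> i _; rewrite poweR_fine // ge0_fin_numE.
apply: prod_le.
apply: prod_powR_le => //.
  by move=> i; have [_ [_ p]] := K i.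

apply: (final_ineq _ _ hopt).
  by move=> i; exact: ltW.
by move=> i; exact: (K i).2.1.
Qed.
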